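(* Let $N\ge 2$ be an integer. Let $G$ be a finite, simple, connected, bipartite graph with at least one edge and adjacency matrix $A$. Suppose that for every edge $\{p,q\}$ of $G$ and every integer $j\ge1$, $(A^{2j+1})_{pq}=\frac{(N-1)^{2j+1}+1}{N}$. Then: (a) the spectral radius of $A$ equals $N-1$; (b) $G$ is regular, with every vertex of degree $N-1$. *)

(* Defs.v *)
From HB Require Import structures.
From mathcomp Require Import all_boot all_order all_algebra all_field.
Set Implicit Arguments. Unset Strict Implicit. Unset Printing Implicit Defensive.
Import Order.TTheory GRing.Theory Num.Theory.
Local Open Scope ring_scope.

Definition simple_graph n (e : rel 'I_n) : Prop :=
  (forall x y, e x y = e y x) /\ (forall x, ~~ e x x).

Definition connected_graph n (e : rel 'I_n) : Prop :=
  forall x y, connect e x y.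

Definition bipartite_graph n (e : rel 'I_n) : Prop :=
  exists c : 'I_n -> bool, forall x y, e x y -> c x != c y.

Definition has_edge n (e : rel 'I_n) : Prop := exists x y, e x y.

Definition adjmx n (e : rel 'I_n) : 'M[algC]_n :=
  \matrix_(i, j) (e i j)%:R.

Definition spectral_radius n (A : 'M[algC]_n) (r : algC) : Prop :=
  (exists2 l, eigenvalue A l & `|l| = r) /\
  (forall l, eigenvalue A l -> `|l| <= r).

Definition degree n (e : rel 'I_n) (x : 'I_n) : nat := #|[set y | e x y]|.

(* Main.v *)
Require Import Defs.
From HB Require Import structures.
From mathcomp Require Import all_boot all_order all_algebra all_field.
From mathcomp Require Import ring lra zify.
Import Order.TTheory GRing.Theory Num.Theory.
Set Implicit Arguments. Unset Strict Implicit.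
Local Open Scope ring_scope.

Section G.
Variables (n' : nat) (e : rel 'I_n'.+1).
Hypothesis esym : forall x y, e x y = e y x.
Local Notation n := n'.+1.
Definition AQ : 'M[rat]_n := \matrix_(i,j) (e i j)%:R.
Local Notation A := AQ.
Definition deg (x : 'I_n) : rat := (degree e x)%:R.

Lemma AQ_tr : A^T = A.
Proof. by apply/matrixP => i j; rewrite !mxE esym. Qed.

Lemma AX_tr k : (A ^+ k)^T = A ^+ k.
Proof.
elim: k => [|k IH]; first by rewrite expr0 trmx1.
by rewrite exprS -mulmxE trmx_mul IH AQ_tr mulmxE -exprS exprSr.
Qed.

Lemma horner_sum p : horner_mx A p = \sum_(i < size p) p`_i *: A ^+ i.
Proof.
rewrite -{1}[p]coefK poly_def rmorph_sum; apply: eq_bigr => i _.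
by rewrite -mul_polyC rmorphM /= horner_mx_C rmorphXn /= horner_mx_X -mulmxE mul_scalar_mx.
Qed.

Lemma horner_tr p : (horner_mx A p)^T = horner_mx A p.
Proof.
apply/matrixP => i j; rewrite mxE horner_sum !summxE; apply: eq_bigr => k _.
have H := congr1 (fun M : 'M[rat]_n => M i j) (AX_tr k); rewrite /= mxE in H; by rewrite !mxE H.
Qed.

Lemma mulA_entry (B : 'M_n) i j : (A * B) i j = \sum_(k | e i k) B k j.
Proof.
rewrite -mulmxE mxE [RHS]big_mkcond /=; apply: eq_bigr => k _.
by rewrite mxE; case: (e i k); rewrite ?mul1r ?mul0r.
Qed.

Lemma sum_deg i : \sum_(k | e i k) (1 : rat) = deg i.
Proof. by rewrite sumr_const /deg /degree cardsE. Qed.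

Lemma A2_diag i : (A ^+ 2) i i = deg i.
Proof.
rewrite expr2 mulA_entry -sum_deg; apply: eq_bigr => k eik.
by rewrite mxE esym eik.
Qed.


Lemma hZ a p : horner_mx A (a *: p) = a *: horner_mx A p.
Proof. by rewrite -mul_polyC rmorphM /= horner_mx_C -mulmxE mul_scalar_mx. Qed.

Variable N : nat.
Hypothesis hN : (2 <= N)%N.
Definition x : rat := N%:R - 1.
Definition c : rat := x ^+ 2.
Definition h k : rat := (x ^+ k + 1) / N%:R.
Hypothesis hedge : forall p q, e p q -> forall j, (1 <= j)%N ->
  (A ^+ (2 * j + 1)) p q = h (2 * j + 1).

Lemma N0 : N%:R != 0 :> rat.
Proof. by rewrite pnatr_eq0 -lt0n (leq_trans _ hN). Qed.

Lemma hedge1 p q : e p q -> (A ^+ 1) p q = h 1.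
Proof.
move=> epq; rewrite expr1 mxE epq /h /x expr1.
by rewrite subrK divff // N0.
Qed.

Definition ypol : {poly rat} := 'X^5 - (c + 1) *: 'X^3 + c *: 'X.
Definition bpol : {poly rat} := 'X^9 - (2 * (c + 1)) *: 'X^7
  + ((c + 1) ^+ 2 + 2 * c) *: 'X^5 - (2 * c * (c + 1)) *: 'X^3 + (c ^+ 2) *: 'X.

Lemma ypol_sq : ypol * ypol = 'X * bpol.
Proof. rewrite /ypol /bpol -!mul_polyC. ring. Qed.


Lemma addE m1 m2 (M M' : 'M[rat]_(m1,m2)) i j : (M + M') i j = M i j + M' i j.
Proof. by rewrite mxE. Qed.
Lemma oppE m1 m2 (M : 'M[rat]_(m1,m2)) i j : (- M) i j = - M i j.
Proof. by rewrite mxE. Qed.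
Lemma scaleE m1 m2 a (M : 'M[rat]_(m1,m2)) i j : (a *: M) i j = a * M i j.
Proof. by rewrite mxE. Qed.
Lemma scalarE a i j : (a%:M : 'M[rat]_n) i j = a * (i == j)%:R.
Proof. by rewrite mxE mulr_natr. Qed.

Lemma sym_entry (p : {poly rat}) i j : horner_mx A p i j = horner_mx A p j i.
Proof. by rewrite -{1}(horner_tr p) mxE. Qed.

Lemma sq_diag (p : {poly rat}) i :
  (horner_mx A p * horner_mx A p) i i = \sum_r (horner_mx A p i r) ^+ 2.
Proof.
rewrite -mulmxE mxE; apply: eq_bigr => r _.
by rewrite expr2 [horner_mx A p r i]sym_entry.
Qed.

Lemma sq_zero (p : {poly rat}) :
  (forall i, (horner_mx A p * horner_mx A p) i i = 0) -> horner_mx A p = 0.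
Proof.
move=> H; apply/matrixP => i j; rewrite mxE.
have /eqP := H i; rewrite sq_diag psumr_eq0; last by move=> r _; exact: sqr_ge0.
move=> /allP/(_ j (mem_index_enum j)) /=.
by rewrite sqrf_eq0 => /eqP.
Qed.

Lemma Y0 : horner_mx A ypol = 0.
Proof.
apply: sq_zero => p.
rewrite -rmorphM ypol_sq rmorphM /= horner_mx_X mulA_entry big1 // => q epq.
have eqp : e q p by rewrite esym.
have H1 := hedge1 eqp; rewrite expr1 in H1.
have H3 : (A ^+ 3) q p = h 3 := hedge eqp (j := 1) isT.
have H5 : (A ^+ 5) q p = h 5 := hedge eqp (j := 2) isT.
have H7 : (A ^+ 7) q p = h 7 := hedge eqp (j := 3) isT.
have H9 : (A ^+ 9) q p = h 9 := hedge eqp (j := 4) isT.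
rewrite /bpol !(rmorphD, rmorphN) /= !hZ !rmorphXn /= horner_mx_X !(addE, oppE, scaleE) H1 H3 H5 H7 H9 /h /c.
ring.
Qed.


Lemma x_ge1 : 1 <= x.
Proof. have : (2%:R <= N%:R :> rat) by rewrite ler_nat. rewrite /x; lra. Qed.

Lemma Nx : N%:R = x + 1 :> rat.
Proof. by rewrite /x subrK. Qed.

Lemma h3E : h 3 = x ^+ 2 - x + 1.
Proof. rewrite /h Nx; field; have := x_ge1; lra. Qed.

Lemma h53E : h 5 - h 3 = x ^+ 2 * (x * (x - 1)).
Proof. rewrite /h Nx; field; have := x_ge1; lra. Qed.

Lemma sum_const_deg a i : \sum_(k | e i k) a = a * deg i.
Proof. by rewrite -sum_deg mulr_sumr; apply: eq_bigr => k _; rewrite mulr1. Qed.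

Lemma deg_ge0 i : 0 <= deg i.
Proof. by rewrite /deg ler0n. Qed.

Lemma deg_pos i j : e i j -> 1 <= deg i.
Proof.
move=> eij; rewrite /deg ler1n /degree card_gt0; apply/set0Pn; exists j.
by rewrite inE.
Qed.

Lemma A4_diag i : (A ^+ 4) i i = h 3 * deg i.
Proof.
rewrite exprS mulA_entry -sum_const_deg; apply: eq_bigr => k eik.
have eki : e k i by rewrite esym.
exact: (hedge eki (j := 1) isT).
Qed.

Definition zpol : {poly rat} := 'X^4 - (c + 1) *: 'X^2 + c%:P.

Lemma zpol_id : zpol * zpol - c *: zpol = ypol * ('X^3 - (c + 1) *: 'X).
Proof. rewrite /ypol /zpol -!mul_polyC. ring. Qed.

Lemma c_gt0 : 0 < c.
Proof. rewrite /c; have := x_ge1; nra. Qed.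

Lemma deg_le i : deg i <= x.
Proof.
set Z := horner_mx A zpol.
have ZZ : Z * Z = c *: Z.
  by apply/eqP; rewrite -subr_eq0 -rmorphM -hZ -rmorphB zpol_id rmorphM /= Y0 mul0r eqxx.
have : 0 <= (Z * Z) i i by rewrite sq_diag; apply: sumr_ge0 => r _; exact: sqr_ge0.
rewrite ZZ scaleE pmulr_rge0 ?c_gt0 //.
rewrite /Z /zpol !(rmorphD, rmorphN) /= !(addE, oppE) horner_mx_C scalarE eqxx !hZ scaleE !rmorphXn /= horner_mx_X.
rewrite A4_diag A2_diag h3E /c.
have := x_ge1 => hx.
move=> H.
have H2 : 0 <= x * (x - deg i) by move: H; rewrite mulr1; nra.
by move: H2; rewrite pmulr_rge0 ?subr_ge0 //; lra.
Qed.


Lemma psd (v : 'rV[rat]_n) (W : 'M[rat]_n) k :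
  0 < k -> W^T = W -> W * W = k *: W -> 0 <= (v *m W *m v^T) 0 0.
Proof.
move=> k0 Wt WW.
have WW' : W *m W = k *: W := WW.
have E : v *m W *m (v *m W)^T = k *: (v *m W *m v^T).
  by rewrite trmx_mul Wt !mulmxA -(mulmxA v W W) WW' -scalemxAr -scalemxAl.
have : 0 <= (v *m W *m (v *m W)^T) 0 0.
  rewrite mxE; apply: sumr_ge0 => r _; rewrite [_^T r 0]mxE -expr2; exact: sqr_ge0.
by rewrite E scaleE pmulr_rge0.
Qed.

Lemma expand (P Q : 'rV[rat]_n) (W : 'M[rat]_n) a b :
  ((a *: P + b *: Q) *m W *m (a *: P + b *: Q)^T) 0 0 =
  a ^+ 2 * (P *m W *m P^T) 0 0 + a * b * ((P *m W *m Q^T) 0 0 + (Q *m W *m P^T) 0 0)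
  + b ^+ 2 * (Q *m W *m Q^T) 0 0.
Proof.
rewrite linearD !linearZ /= !mulmxDl !mulmxDr -!scalemxAl -!scalemxAr.
rewrite !(addE, scaleE); ring.
Qed.

Lemma ent (M : 'M[rat]_n) i j : ((delta_mx 0 i : 'rV[rat]_n) *m M *m (delta_mx 0 j : 'rV[rat]_n)^T) 0 0 = M i j.
Proof. by rewrite trmx_delta -rowE -(colE j (row i M)) !mxE. Qed.


Definition wpol : {poly rat} := 'X^4 - 'X^2.

Lemma wpol_id : wpol * wpol - (c * (c - 1)) *: wpol = ypol * ('X^3 + (c - 1) *: 'X).
Proof. rewrite /ypol /wpol -!mul_polyC /c. ring. Qed.

Lemma awa_id : 'X * wpol * 'X - c *: wpol = ypol * 'X.
Proof. rewrite /ypol /wpol -!mul_polyC. ring. Qed.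

Lemma deg_lower p q : (3 <= N)%N -> e p q -> x <= deg p.
Proof.
move=> hN3 epq.
have eqp : e q p by rewrite esym.
have x2 : 2 <= x.
  have : (3%:R <= N%:R :> rat) by rewrite ler_nat.
  rewrite /x; lra.
set W := horner_mx A wpol.
have c4 : 4 <= c by rewrite /c expr2; nra.
have k0 : 0 < c * (c - 1) by apply: mulr_gt0; lra.
have WW : W * W = (c * (c - 1)) *: W.
  by apply/eqP; rewrite -subr_eq0 -rmorphM -hZ -rmorphB wpol_id rmorphM /= Y0 mul0r eqxx.
have AWA : A *m W *m A = c *: W.
  apply/eqP; rewrite -subr_eq0 -hZ !mulmxE -[A in A * _ * _]horner_mx_X -[A in _ * A]horner_mx_X.
  by rewrite -!rmorphM -rmorphB awa_id rmorphM /= Y0 mul0r eqxx.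
have WE : W = A ^+ 4 - A ^+ 2 by rewrite /W /wpol rmorphB !rmorphXn /= horner_mx_X.
have AW : A *m W = A ^+ 5 - A ^+ 3 by rewrite WE mulmxE mulrBr -!exprS.
have WA : W *m A = A ^+ 5 - A ^+ 3 by rewrite WE mulmxE mulrBl -!exprSr.
have Wt : W^T = W := horner_tr wpol.
set dp : 'rV[rat]_n := delta_mx 0 p.
set dq : 'rV[rat]_n := delta_mx 0 q.
have Wdiag i : W i i = deg i * (x * (x - 1)).
  rewrite WE addE oppE A4_diag A2_diag h3E; ring.
have m35 : (A ^+ 5 - A ^+ 3) p q = x ^+ 2 * (x * (x - 1)).
  rewrite addE oppE -h53E.
  have -> : (A ^+ 5) p q = h 5 := hedge epq (j := 2) isT.
  by have -> : (A ^+ 3) p q = h 3 := hedge epq (j := 1) isT.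
have m35' : (A ^+ 5 - A ^+ 3) q p = x ^+ 2 * (x * (x - 1)).
  rewrite addE oppE -h53E.
  have -> : (A ^+ 5) q p = h 5 := hedge eqp (j := 2) isT.
  by have -> : (A ^+ 3) q p = h 3 := hedge eqp (j := 1) isT.
have H := psd (W (q) (q) *: (dp *m A) - ((A ^+ 5 - A ^+ 3) p q) *: dq) k0 Wt WW.
rewrite -scaleNr expand in H.
have E1 : ((dp *m A) *m W *m (dp *m A)^T) 0 0 = c * W p p.
  by rewrite trmx_mul AQ_tr !mulmxA -(mulmxA dp) -(mulmxA dp) AWA -scalemxAr -scalemxAl scaleE ent.
have E2 : ((dp *m A) *m W *m dq^T) 0 0 = (A ^+ 5 - A ^+ 3) p q.
  by rewrite -(mulmxA dp) AW ent.
have E3 : (dq *m W *m (dp *m A)^T) 0 0 = (A ^+ 5 - A ^+ 3) q p.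
  by rewrite trmx_mul AQ_tr mulmxA -(mulmxA dq) WA ent.
rewrite E1 E2 E3 ent m35 m35' !Wdiag in H.
set d := deg p in H *; set f := deg q in H *; set s := x * (x - 1) in H *.
have f1 : 1 <= f := deg_pos eqp.
have s2 : 2 <= s by rewrite /s; nra.
have dle : d <= x := deg_le p.
have fle : f <= x := deg_le q.
have d0 : 0 <= d := deg_ge0 p.
have key : 0 <= (f * s ^+ 3 * x ^+ 2) * (d * f - x ^+ 2).
  by move: H; congr (0 <= _); rewrite /c; ring.
have pos : 0 < f * s ^+ 3 * x ^+ 2.
  by apply: mulr_gt0; [apply: mulr_gt0 |]; rewrite ?exprn_gt0 //; lra.
rewrite pmulr_rge0 // subr_ge0 in key.
nra.
Qed.

End G.

Lemma rowsum n (e : rel 'I_n) i : \sum_j (adjmx e) i j = (degree e i)%:R.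
Proof.
rewrite /degree -sumr_const [RHS]big_mkcond /=; apply: eq_bigr => j _.
by rewrite mxE inE; case: (e i j).
Qed.

Lemma radius n (e : rel 'I_n.+1) (d : nat) :
  (forall x y, e x y = e y x) -> (forall x, degree e x = d) ->
  spectral_radius (adjmx e) d%:R.
Proof.
move=> esym hd.
have colsum j : \sum_i (adjmx e) i j = d%:R.
  rewrite -(hd j) -rowsum; apply: eq_bigr => i _; by rewrite !mxE esym.
split.
  exists d%:R; last by rewrite ger0_norm ?ler0n.
  apply/eigenvalueP; exists (const_mx 1).
    apply/rowP => j; rewrite [LHS]mxE [RHS]mxE [const_mx 1 0 j]mxE mulr1 -(colsum j); apply: eq_bigr => i _.
    by rewrite mxE mul1r.
  apply/eqP => /rowP /(_ ord0); rewrite !mxE => /eqP; by rewrite oner_eq0.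
move=> l /eigenvalueP [v vB v0].
set S := \sum_j `|v 0 j|.
have S0 : 0 < S.
  rewrite lt_def sumr_ge0 ?andbT; last by move=> j _; exact: normr_ge0.
  apply: contra v0; rewrite psumr_eq0; last by move=> j _; exact: normr_ge0.
  move=> /allP H; apply/eqP/rowP => j; rewrite mxE.
  by apply/eqP; rewrite -normr_eq0; apply/eqP/eqP; apply: H; rewrite mem_index_enum.
have : `|l| * S <= d%:R * S.
  have -> : `|l| * S = \sum_j `|(v *m adjmx e) 0 j|.
    rewrite mulr_sumr; apply: eq_bigr => j _.
    by rewrite vB mxE normrM.
  have -> : d%:R * S = \sum_i `|v 0 i| * \sum_j adjmx e i j.
    rewrite mulr_sumr; apply: eq_bigr => i _.
    by rewrite rowsum hd mulrC.
  under [X in _ <= X]eq_bigr do rewrite mulr_sumr.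
  rewrite exchange_big /=; apply: ler_sum => j _.
  rewrite mxE; apply: le_trans (ler_norm_sum _ _ _) _.
  apply: ler_sum => i _; rewrite normrM [`|adjmx e i j|]ger0_norm //.
  by rewrite mxE ler0n.
by rewrite ler_pM2r.
Qed.

Lemma adj_map n' (e : rel 'I_n'.+1) : adjmx e = map_mx (@ratr algC) (AQ e).
Proof. by apply/matrixP => i j; rewrite !mxE ratr_nat. Qed.

Lemma map_exp n' (M : 'M[rat]_n'.+1) k :
  map_mx (@ratr algC) (M ^+ k) = (map_mx (@ratr algC) M) ^+ k.
Proof.
elim: k => [|k IH]; first by rewrite !expr0 map_mx1.
by rewrite !exprS -!mulmxE map_mxM IH.
Qed.

Unset Implicit Arguments.

Theorem proposition2 (N n : nat) (e : rel 'I_n) :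
  (2 <= N)%N ->
  simple_graph e -> connected_graph e -> bipartite_graph e -> has_edge e ->
  (forall p q, e p q -> forall j : nat, (1 <= j)%N ->
     (adjmx e ^+ (2 * j + 1)) p q = ((N%:R - 1) ^+ (2 * j + 1) + 1) / N%:R) ->
  spectral_radius (adjmx e) (N%:R - 1) /\ (forall x, degree e x = N.-1).
Proof.
move=> hN [esym eirr] conn _ [x0 [y0 exy]] hyp.
destruct n as [|n']; first by case: x0 exy.
have hedge : forall p q, e p q -> forall j, (1 <= j)%N ->
    (AQ e ^+ (2 * j + 1)) p q = h N (2 * j + 1).
  move=> p q epq j hj; have := hyp p q epq j hj.
  rewrite adj_map -map_exp mxE.
  have -> : ((N%:R - 1) ^+ (2 * j + 1) + 1) / N%:R = @ratr algC (h N (2 * j + 1)).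
    by rewrite /h /x fmorph_div rmorphD rmorphXn rmorphB rmorph1 !rmorph_nat.
  exact: fmorph_inj.
have degN : forall v, degree e v = N.-1.
  move=> v.
  have [w evw] : exists w, e v w.
    case: (eqVneq v x0) => [->|nv]; first by exists y0.
    case/connectP: (conn v x0) => s.
    case: s => [_ /= H | w s /= /andP [evw _] _]; last by exists w.
    by rewrite H eqxx in nv.
  have : deg e v = x N.
    apply/eqP; rewrite eq_le (deg_le esym hN hedge) /=.
    case N3 : (3 <= N)%N; first exact: (deg_lower esym hN hedge N3 evw).
    have N2 : N = 2 by lia.
    by rewrite /x N2 (deg_pos evw).
  rewrite /deg /x.
  have -> : (N%:R - 1 : rat) = (N.-1)%:R by rewrite -subn1 natrB //; lia.
  by move/eqP; rewrite eqr_nat => /eqP.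
split; last exact: degN.
have -> : (N%:R - 1 : algC) = (N.-1)%:R by rewrite -subn1 natrB //; lia.
exact: radius esym degN.
Qed.
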